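(* Let $k$ be an algebraically closed field of characteristic zero and let $(A,M)$ be a standard graded $k$-algebra, $A=A_0\oplus A_1\oplus\cdots$. If $A$ is not a principal ideal algebra, then the set $$\mathcal{E}=\{\,i\in\mathbb{N}\;:\;\text{there exist } N\ge 0 \text{ and a }k\text{-algebra homomorphism }\alpha:A\to k[t]/\langle t^{N+1}\rangle \text{ with } \dim_k\alpha(A_i)\ge 2\,\}$$ is finite and nonempty.
   Context: All algebras are commutative, unital and finite dimensional over $k$. A principal ideal algebra is a finite dimensional commutative $k$-algebra in which every ideal is principal. A finite dimensional non-negatively graded algebra $A=A_0\oplus A_1\oplus\cdots\oplus A_n$ is standard if $M=A_1\oplus\cdots\oplus A_n$ is a maximal ideal generated by elements of degree one. A truncated polynomial algebra is one of the form $k[t]/\langle t^{N+1}\rangle$. *)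

(* Defs.v *)
From HB Require Import structures.
From mathcomp Require Import all_boot all_order all_algebra all_field.
Set Implicit Arguments. Unset Strict Implicit. Unset Printing Implicit Defensive.
Import GRing.Theory.
Local Open Scope ring_scope.

(* Ideals of a finite-dimensional k-algebra A: k-subspaces closed under
   multiplication by arbitrary elements of A (every ideal of a k-algebra is
   automatically a k-subspace). *)
Definition is_ideal (k : fieldType) (A : falgType k) (I : {vspace A}) : Prop :=
  forall a x : A, x \in I -> a * x \in I.

Definition principal_ideal (k : fieldType) (A : falgType k) (I : {vspace A}) : Prop :=
  exists g : A, forall x : A, x \in I <-> exists a : A, x = a * g.

Definition principal_ideal_algebra (k : fieldType) (A : falgType k) : Prop :=
  forall I : {vspace A}, is_ideal I -> principal_ideal I.

Definition maximal_ideal (k : fieldType) (A : falgType k) (M : {vspace A}) : Prop :=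
  [/\ is_ideal M, M != fullv &
      forall I : {vspace A}, is_ideal I -> (M <= I)%VS -> I = M \/ I = fullv].

Definition graded_algebra (k : fieldType) (A : falgType k) (n : nat)
    (Ai : nat -> {vspace A}) : Prop :=
  [/\ (\sum_(i < n.+1) Ai i)%VS = fullv,
      directv (\sum_(i < n.+1) Ai i)%VS,
      forall i, (n < i)%N -> Ai i = 0%VS,
      (1 : A) \in Ai 0%N &
      forall i j (x y : A), x \in Ai i -> y \in Ai j -> x * y \in Ai (i + j)%N].

Definition irrelevant_ideal (k : fieldType) (A : falgType k) (n : nat)
    (Ai : nat -> {vspace A}) : {vspace A} :=
  (\sum_(1 <= i < n.+1) Ai i)%VS.

Definition standard_graded (k : fieldType) (A : falgType k) (n : nat)
    (Ai : nat -> {vspace A}) : Prop :=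
  [/\ graded_algebra n Ai,
      maximal_ideal (irrelevant_ideal n Ai) &
      irrelevant_ideal n Ai = (fullv * Ai 1%N)%VS].

(* The truncated polynomial algebra k[t]/<t^(N+1)> is represented on
   'rV[k]_(N.+1), the coordinates in the basis 1, t, ..., t^N. *)
Definition trunc_poly (k : fieldType) (N : nat) (u : 'rV[k]_N.+1) : {poly k} :=
  \poly_(i < N.+1) u 0 (inord i).

Definition trunc_mul (k : fieldType) (N : nat) (u v : 'rV[k]_N.+1) : 'rV[k]_N.+1 :=
  \row_(i < N.+1) (trunc_poly u * trunc_poly v)`_i.

Definition trunc_one (k : fieldType) (N : nat) : 'rV[k]_N.+1 :=
  \row_(i < N.+1) (i == 0%N :> nat)%:R.

(* k-algebra homomorphism A -> k[t]/<t^(N+1)> (k-linearity is built into 'Hom) *)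
Definition trunc_alg_hom (k : fieldType) (A : falgType k) (N : nat)
    (alpha : 'Hom(A, 'rV[k]_N.+1)) : Prop :=
  alpha 1 = trunc_one k N /\
  forall x y : A, alpha (x * y) = trunc_mul (alpha x) (alpha y).

Definition E_set (k : fieldType) (A : falgType k) (Ai : nat -> {vspace A})
    (i : nat) : Prop :=
  exists (N : nat) (alpha : 'Hom(A, 'rV[k]_N.+1)),
    trunc_alg_hom alpha /\ (2 <= \dim (alpha @: Ai i)%VS)%N.

(* Main.v *)
Require Import Defs.
From HB Require Import structures.
From mathcomp Require Import all_boot all_order all_algebra all_field.
Set Implicit Arguments. Unset Strict Implicit. Unset Printing Implicit Defensive.
Import GRing.Theory.
Local Open Scope ring_scope.
Import passmx.

Definition Sv (k : fieldType) (A : falgType k) (n : nat) (Ai : nat -> {vspace A}) j :=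
  (\sum_(i < n.+1 | (j <= i)%N) Ai i)%VS.

Lemma irr_S (k : fieldType) (A : falgType k) n (Ai : nat -> {vspace A}) :
  irrelevant_ideal n Ai = Sv n Ai 1.
Proof. by rewrite /irrelevant_ideal big_geq_mkord. Qed.

Lemma S_top (k : fieldType) (A : falgType k) n (Ai : nat -> {vspace A}) :
  Sv n Ai n.+1 = 0%VS.
Proof. by rewrite /Sv big_pred0 // => i; rewrite leqNgt ltn_ord. Qed.

Lemma mulS (k : fieldType) (A : falgType k) n (Ai : nat -> {vspace A}) :
  graded_algebra n Ai -> forall i j u v, u \in Sv n Ai i -> v \in Sv n Ai j ->
  u * v \in Sv n Ai (i + j).
Proof.
case=> _ _ Hz _ Hm i j u v /memv_sumP[us Hus ->] /memv_sumP[vs Hvs ->].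
rewrite mulr_suml; apply: memv_suml => l Hl.
rewrite mulr_sumr; apply: memv_suml => l' Hl'.
have Hp := Hm _ _ _ _ (Hus l Hl) (Hvs l' Hl').
case: (ltnP (l + l') n.+1) => Hlt.
  apply: (subvP (sumv_sup (Ordinal Hlt) _ (subvv _))) => //=.
  by rewrite leq_add.
by move: Hp; rewrite Hz // memv0 => /eqP ->; rewrite mem0v.
Qed.

Lemma nilpS (k : fieldType) (A : falgType k) n (Ai : nat -> {vspace A}) :
  graded_algebra n Ai -> forall m, m \in Sv n Ai 1 -> m ^+ n.+1 = 0.
Proof.
move=> Hg m Hm.
have H : forall j, m ^+ j.+1 \in Sv n Ai j.+1.
  elim=> [|j IH]; first by rewrite expr1.
  by rewrite exprS (mulS Hg Hm IH).
by move: (H n); rewrite S_top memv0 => /eqP.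
Qed.

Lemma unit1m (k : fieldType) (A : falgType k) n (Ai : nat -> {vspace A}) :
  (forall x y : A, x * y = y * x) ->
  graded_algebra n Ai -> forall m, m \in Sv n Ai 1 -> exists d, d * (1 - m) = 1.
Proof.
move=> Ac Hg m Hm; exists (\sum_(i < n.+1) m ^+ i).
have := subrX1 m n.+1; rewrite (nilpS Hg Hm) sub0r => H.
by rewrite -opprB mulrN Ac -H opprK.
Qed.

Lemma one_notin (k : fieldType) (A : falgType k) (M : {vspace A}) :
  is_ideal M -> M != fullv -> (1 : A) \notin M.
Proof.
move=> HI Hne; apply: contra Hne => H1; rewrite eqEsubv subvf /=.
by apply/subvP => a _; rewrite -[a]mulr1 HI.
Qed.

Lemma localS (k : fieldType) (A : falgType k) n (Ai : nat -> {vspace A}) :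
  (forall x y : A, x * y = y * x) -> standard_graded n Ai ->
  forall b, b \notin Sv n Ai 1 -> exists d, d * b = 1.
Proof.
move=> Ac [Hg [HMi HMne HMmax] _] b Hb; rewrite irr_S in HMi HMne HMmax.
set M := Sv n Ai 1 in HMi HMne HMmax Hb *.
set J := (M + amulr b @: fullv)%VS.
have HJ : is_ideal J.
  move=> a x /memv_addP[u Hu [v /memv_imgP[c _ ->] ->]].
  rewrite mulrDr; apply: memv_add; first exact: HMi.
  have -> : a * amulr b c = amulr b (a * c) by rewrite !lfunE /= mulrA.
  by rewrite memv_img ?memvf.
have bJ : b \in J.
  apply/memv_addP; exists 0; rewrite ?mem0v //; exists b; rewrite ?add0r //.
  by apply/memv_imgP; exists 1; rewrite ?memvf // lfunE /= mul1r.
case: (HMmax J HJ (addvSl _ _)) => HJe.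
  by move: Hb; rewrite -HJe bJ.
have : (1 : A) \in J by rewrite HJe memvf.
case/memv_addP=> u Hu [v /memv_imgP[c _ ->]]; rewrite lfunE /= => H1.
have [d Hd] := unit1m Ac Hg Hu.
exists (d * c); rewrite -mulrA -Hd; congr (_ * _).
by rewrite H1 addrC addKr.
Qed.

Lemma pia_of_dim1 (k : fieldType) (A : falgType k) n (Ai : nat -> {vspace A}) :
  (forall x y : A, x * y = y * x) -> standard_graded n Ai ->
  (\dim (Ai 1%N) <= 1)%N -> principal_ideal_algebra A.
Proof.
move=> Ac Hstd Hd; have [Hg [HMi HMne HMmax] HMgen] := Hstd.
have [_ _ Hz H1 Hm] := Hg.
set x := vpick (Ai 1%N).
have HA1 : Ai 1%N = <[x]>%VS.
  apply/eqP; rewrite eq_sym eqEdim -memvE memv_pick /= dim_vline.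
  case: (eqVneq x 0) => Hx //=.
  have : vpick (Ai 1%N) == 0 by rewrite -/x Hx.
  by rewrite vpick0 => /eqP ->; rewrite dimv0.
have HM : forall m, m \in Sv n Ai 1 <-> exists a, m = a * x.
  move=> m; rewrite -irr_S HMgen HA1 -limg_amulr; split.
    by case/memv_imgP => a _ ->; exists a; rewrite lfunE.
  by case=> a ->; apply/memv_imgP; exists a; rewrite ?memvf // lfunE.
have Hxp : forall j, x ^+ j \in Ai j.
  elim=> [|j IH]; first by rewrite expr0.
  by rewrite exprS (Hm 1%N j) // memv_pick.
have Hxn : x ^+ n.+1 = 0.
  by move: (Hxp n.+1); rewrite Hz // memv0 => /eqP.
move=> I HI.
have exP : exists j, x ^+ j \in I by exists n.+1; rewrite Hxn mem0v.
case: (ex_minnP exP) => j0 Hj0 Hmin.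
exists (x ^+ j0) => y; split; last by case=> a ->; exact: HI.
move=> Hy.
suff : forall j, (j <= j0)%N -> exists a, y = a * x ^+ j by apply.
elim=> [|j IH] Hj; first by exists y; rewrite expr0 mulr1.
have [a Ha] := IH (ltnW Hj).
case: (boolP (a \in Sv n Ai 1)) => Ha1.
  have [a' Ea] := (HM a).1 Ha1.
  by exists a'; rewrite Ha Ea -mulrA -exprS.
have [d Hda] := localS Ac Hstd Ha1.
have : x ^+ j \in I by rewrite -[x ^+ j]mul1r -Hda -mulrA -Ha HI.
by move/Hmin; rewrite leqNgt Hj.
Qed.

Lemma eigA (k : closedFieldType) (A : falgType k) (phi : 'End(A)) :
  exists c, exists2 v, v != 0 & phi v = c *: v.
Proof.
set e := vbasis (fullv : {vspace A}).
have eb : basis_of fullv e := vbasisP fullv.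
have : exists c, root (char_poly (mxof e e phi)) c.
  apply/closed_rootP; rewrite size_char_poly dimvf.
  by have := FalgType_proper A; case: (dim A).
case=> c; rewrite -eigenvalue_root_char => /eigenvalueP [v Hv vnz].
exists c, (vecof e v); first by rewrite vecof_eq0.
apply: (can_inj (rVofK eb)).
by rewrite -mul_mxof Hv linearZ /= vecofK.
Qed.

Lemma chi_ex (k : closedFieldType) (A : falgType k) n (Ai : nat -> {vspace A}) :
  (forall x y : A, x * y = y * x) -> standard_graded n Ai ->
  forall a, exists c, a - c%:A \in Sv n Ai 1.
Proof.
move=> Ac Hstd a; have [c [v vnz Hv]] := eigA (amull a).
exists c; apply/negPn/negP => Hn.
have [d Hd] := localS Ac Hstd Hn.
move/eqP: vnz; apply; rewrite -[v]mul1r -Hd -mulrA mulrBl.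
by move: Hv; rewrite lfunE /= => ->; rewrite mulr_algl subrr mulr0.
Qed.

Lemma chi_uniq (k : fieldType) (A : falgType k) (M : {vspace A}) :
  is_ideal M -> M != fullv -> forall a c c',
  a - c%:A \in M -> a - c'%:A \in M -> c = c'.
Proof.
move=> HI Hne a c c' H1 H2; apply/eqP/negPn/negP => Hcc.
have : (c' - c)%:A \in M.
  by have := memvB H1 H2; rewrite opprB addrC -!addrA addKr scalerBl addrC.
have Hnz : c' - c != 0 by rewrite subr_eq0 eq_sym.
move/(memvZ (c' - c)^-1); rewrite scalerA mulVf // scale1r.
by apply/negP; apply: one_notin.
Qed.

Lemma chi_props (k : fieldType) (A : falgType k) (M : {vspace A}) (chi : A -> k) :
  (forall x y : A, x * y = y * x) -> is_ideal M -> M != fullv -> (forall a, a - (chi a)%:A \in M) ->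
  [/\ linear_for *%R chi, chi 1 = 1 &
      forall a b, chi (a * b) = chi a * chi b].
Proof.
move=> Ac HI Hne Hs; split.
- move=> r a b /=; apply: (chi_uniq HI Hne (Hs (r *: a + b))).
  suff -> : r *: a + b - (r * chi a + chi b)%:A =
     r *: (a - (chi a)%:A) + (b - (chi b)%:A) by rewrite memvD ?memvZ.
  by rewrite scalerDl -scalerA scalerBr opprD addrACA.
- by apply: (chi_uniq HI Hne (Hs 1)); rewrite scale1r subrr mem0v.
- move=> a b; apply: (chi_uniq HI Hne (Hs (a * b))).
  have E : a * b - (chi a * chi b)%:A =
     (a - (chi a)%:A) * b + chi a *: (b - (chi b)%:A).
    by rewrite mulrBl mulr_algl scalerBr scalerA addrA subrK.
  by rewrite E memvD ?memvZ // Ac HI.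
Qed.

Lemma capV (k : fieldType) (A : falgType k) n (Ai : nat -> {vspace A}) :
  graded_algebra n Ai -> (Ai 1%N :&: (<[1]> + Sv n Ai 2) = 0)%VS.
Proof.
case=> _ Hdir Hz H1 _.
case: n Ai Hdir Hz H1 => [|n] Ai Hdir Hz H1; first by rewrite Hz // cap0v.
have := (directv_sumP Hdir (Ordinal (isT : (1 < n.+2)%N)) isT).
move=> Hc; apply/eqP; rewrite -subv0 -Hc capvS //.
rewrite subv_add; apply/andP; split.
  by rewrite -memvE; apply: (subvP (sumv_sup ord0 _ (subvv _))).
by apply/subv_sumP => j Hj; apply: sumv_sup (subvv _); rewrite /=; case: j Hj => [[|[|j]] Hj].
Qed.

Lemma trunc_mul_row (k : fieldType) N (g h : nat -> k) :
  trunc_mul (\row_(i < N.+1) g i) (\row_(i < N.+1) h i) =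
  \row_(i < N.+1) (\sum_(l < i.+1) g l * h (i - l)%N).
Proof.
apply/rowP => j; rewrite !mxE coefM; apply: eq_bigr => l _.
have Hl : (l < N.+1)%N by apply: leq_ltn_trans (ltn_ord j); rewrite -ltnS.
have Hl' : (j - l < N.+1)%N by apply: leq_ltn_trans (ltn_ord j); rewrite leq_subr.
by rewrite /trunc_poly !coef_poly Hl Hl' !mxE !inordK.
Qed.

Lemma lin_hom (k : fieldType) (A : falgType k) m (F : A -> 'rV[k]_m) :
  linear F -> exists h : 'Hom(A, 'rV[k]_m), forall a, h a = F a.
Proof.
move=> HF.
pose FL : {linear A -> 'rV[k]_m} := HB.pack F (GRing.isLinear.Build _ _ _ _ F HF).
by exists (linfun FL) => a; rewrite lfunE.
Qed.

Lemma E1 (k : closedFieldType) (A : falgType k) n (Ai : nat -> {vspace A}) :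
  (forall x y : A, x * y = y * x) -> standard_graded n Ai ->
  (2 <= \dim (Ai 1%N))%N -> E_set Ai 1.
Proof.
move=> Ac Hstd Hd.
have [Hg [HMi HMne HMmax] HMgen] := Hstd; rewrite irr_S in HMi HMne.
set M := Sv n Ai 1 in HMi HMne.
have Hex := chi_ex Ac Hstd.
pose chi a := xchoose (Hex a).
have Hchi : forall a, a - (chi a)%:A \in M := fun a => xchooseP (Hex a).
have [chiL chi1 chiM] := chi_props Ac HMi HMne Hchi.
set V := (<[1]> + Sv n Ai 2)%VS.
have HcV : (Ai 1%N :&: V = 0)%VS := capV Hg.
pose p := daddv_pi (Ai 1%N) V.
have p_id : forall w, w \in Ai 1%N -> p w = w := fun w => daddv_pi_id HcV.
have p0 : forall v, v \in V -> p v = 0.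
  move=> v Hv.
  have HvUV : v \in (Ai 1%N + V)%VS by apply/memv_addP; exists 0; rewrite ?mem0v //; exists v; rewrite ?add0r.
  have H2 := daddv_pi_add HcV HvUV.
  have HcV' : (V :&: Ai 1%N = 0)%VS by rewrite capvC.
  have H3 : daddv_pi V (Ai 1%N) v = v := daddv_pi_id HcV' Hv.
  rewrite H3 in H2.
  by move/(canRL (addrK _)): H2; rewrite subrr.
have p1 : p 1 = 0 by apply: p0; apply: (subvP (addvSl _ _)); apply: memv_line.
have pA : forall a c, p (a - c%:A) = p a.
  by move=> a c; rewrite linearB linearZ /= p1 scaler0 subr0.
have pM : forall a b, p (a * b) = chi a *: p b + chi b *: p a.
  have key : forall ma mb ca cb, ma \in M -> mb \in M ->
      p ((ma + ca%:A) * (mb + cb%:A)) = ca *: p mb + cb *: p ma.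
    move=> ma mb ca cb Hma Hmb.
    rewrite mulrDl !mulrDr !linearD /=.
    rewrite p0; last first.
      by apply: (subvP (addvSr _ _)); apply: (mulS Hg Hma Hmb).
    rewrite mulr_algr mulr_algl mulr_algl linearZ /= linearZ /= .
    by rewrite !linearZ /= p1 !scaler0 addr0 add0r addrC.
  move=> a b; have := key _ _ (chi a) (chi b) (Hchi a) (Hchi b).
  by rewrite !subrK !pA.
set d := \dim (Ai 1%N) in Hd.
pose i0 : 'I_d := Ordinal (ltnW Hd).
pose i1 : 'I_d := Ordinal Hd.
pose X := vbasis (Ai 1%N).
pose G a (i : nat) := if i == 0%N then chi a else if i == 2%N then coord X i0 (p a)
   else if i == 3%N then coord X i1 (p a) else 0.
pose F a := \row_(i < 4) G a i.
have FL : linear F.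
  move=> r a b; apply/rowP => j; rewrite !mxE /G.
  case: (j : nat) => [|[|[|[|j']]]] /=.
  - by rewrite chiL.
  - by rewrite mulr0 addr0.
  - by rewrite linearP /= linearP.
  - by rewrite linearP /= linearP.
  - by rewrite mulr0 addr0.
have [alpha Halpha] := lin_hom FL.
exists 3%N, alpha; split; first split.
- rewrite Halpha; apply/rowP => j; rewrite !mxE /G.
  by case: (j : nat) => [|[|[|[|j']]]] //=; rewrite ?chi1 // p1 linear0.
- move=> a b; rewrite !Halpha /F trunc_mul_row; apply/rowP => j; rewrite !mxE.
  case: j => [[|[|[|[|j']]]] Hj] //=; rewrite ?big_ord_recr ?big_ord0 /= /G /=.
  + by rewrite chiM add0r.
  + by rewrite mulr0 mul0r !addr0.
  + by rewrite pM linearD !linearZ /= mul0r addr0 add0r [coord _ _ (p a) * _]mulrC.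
  + by rewrite pM linearD !linearZ /= mul0r mulr0 !addr0 add0r [coord _ _ (p a) * _]mulrC.
rewrite irr_S -/M in HMgen.
have XM : forall x, x \in Ai 1%N -> x \in M.
  by move=> x Hx; rewrite HMgen -[x]mul1r memv_mul ?memvf.
have chi0 : forall x, x \in Ai 1%N -> chi x = 0.
  move=> x Hx; apply: (chi_uniq HMi HMne (Hchi x)).
  by rewrite scale0r subr0 XM.
have Xf : free X := basis_free (vbasisP _).
have XA : forall i : 'I_d, X`_i \in Ai 1%N.
  by move=> i; apply: vbasis_mem; apply: mem_nth; rewrite size_tuple.
have e2 : alpha X`_i0 0 (inord 2) = 1 /\ alpha X`_i0 0 (inord 3) = 0.
  by rewrite Halpha !mxE !inordK //= /G /= (p_id _ (XA i0)) !coord_free.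
have e3 : alpha X`_i1 0 (inord 2) = 0 /\ alpha X`_i1 0 (inord 3) = 1.
  by rewrite Halpha !mxE !inordK //= /G /= (p_id _ (XA i1)) !coord_free.
have Hfree : free [:: alpha X`_i0; alpha X`_i1].
  rewrite free_cons seq1_free span_seq1; apply/andP; split.
    apply/negP => /vlineP [c Hc].
    have := e2.1; rewrite Hc mxE e3.1 mulr0 => /eqP; by rewrite eq_sym oner_eq0.
  apply/negP => /eqP H0; have := e3.2; rewrite H0 mxE => /eqP; by rewrite eq_sym oner_eq0.
have Hsub : (<<[:: alpha X`_i0; alpha X`_i1]>> <= alpha @: Ai 1%N)%VS.
  by apply/span_subvP => y; rewrite !inE => /orP[] /eqP ->; rewrite memv_img ?XA.
by have := dimvS Hsub; rewrite (eqP Hfree).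
Qed.

Unset Implicit Arguments.

Theorem lemma2p3 (k : closedFieldType) (chark0 : [pchar k] =i pred0)
    (A : falgType k) (Acomm : forall x y : A, x * y = y * x)
    (n : nat) (Ai : nat -> {vspace A})
    (Hstd : standard_graded n Ai)
    (HnotPIA : ~ principal_ideal_algebra A) :
  (exists i : nat, E_set Ai i) /\
  (exists B : nat, forall i : nat, E_set Ai i -> (i <= B)%N).
Proof.
split.
  exists 1%N; case: (leqP 2 (\dim (Ai 1%N))) => Hd.
    exact: E1 Acomm Hstd Hd.
  by exfalso; apply: HnotPIA; apply: (pia_of_dim1 Acomm Hstd); rewrite -ltnS.
exists n => i [N [alpha [_ Hdim]]].
rewrite leqNgt; apply/negP => Hi.
have [Hg _ _] := Hstd; have [_ _ Hz _ _] := Hg.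
by move: Hdim; rewrite Hz // limg0 dimv0.
Qed.
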